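(* Let $0<\mu<1$, $0\le\lambda<1$, and let $I_\theta$ be the function defined for $x\in(0,1)$ by $$I_\theta(x)=-x\log\left[\frac{\mu+\bar\mu\lambda}{1-2\bar x/(\sqrt\Delta+1)}\right]-\bar x\log\left[\frac{\bar\mu+\mu\lambda}{1-2x/(\sqrt\Delta+1)}\right],\qquad \Delta=1+\frac{4\lambda x\bar x}{\mu\bar\mu(1-\lambda)^2},$$ with $\bar\mu=1-\mu$, $\bar x=1-x$. Then for all $x\in(0,1)$, $$I_\theta(x)\ge 2\,\frac{1-\lambda}{1+\lambda}\,(x-\mu)^2.$$ Moreover, for $x\ne\mu$, the function $g(x)=I_\theta(x)/(x-\mu)^2$ attains its global minimum over $(0,1)\setminus\{\mu\}$ at $x=\bar\mu$ (when $\mu\neq1/2$). *)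

(* Defs.v *)
From Stdlib Require Import Reals Lra.
Open Scope R_scope.

Definition Delta (mu lam x : R) : R :=
  1 + 4 * lam * x * (1 - x) / (mu * (1 - mu) * (1 - lam) ^ 2).

Definition I_theta (mu lam x : R) : R :=
  - x * ln ((mu + (1 - mu) * lam) / (1 - 2 * (1 - x) / (sqrt (Delta mu lam x) + 1)))
  - (1 - x) * ln (((1 - mu) + mu * lam) / (1 - 2 * x / (sqrt (Delta mu lam x) + 1))).

Definition g_ratio (mu lam x : R) : R := I_theta mu lam x / (x - mu) ^ 2.

(* Main.v *)
Require Import Defs.
From Coquelicot Require Import Coquelicot.
From Stdlib Require Import Reals Lra.
Open Scope R_scope.

Lemma Delta_ge1 mu lam x : 0 < mu < 1 -> 0 <= lam < 1 -> 0 < x < 1 -> 1 <= Defs.Delta mu lam x.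
Proof.
  intros Hmu Hl Hx. unfold Defs.Delta.
  assert (0 < mu * (1 - mu) * (1 - lam) ^ 2) by (apply Rmult_lt_0_compat; [nra| apply pow_lt; lra]).
  assert (0 <= 4 * lam * x * (1 - x) / (mu * (1 - mu) * (1 - lam) ^ 2)).
  { apply Rdiv_le_0_compat; [|lra]. assert (0 <= lam * (x*(1-x))) by (apply Rmult_le_pos; nra). nra. }
  lra.
Qed.

Lemma Delta_deriv mu lam x : 0 < mu < 1 -> 0 <= lam < 1 -> 0 < x < 1 ->
  is_derive (Defs.Delta mu lam) x ((Defs.Delta mu lam x - 1) * (1 - 2 * x) / (x * (1 - x))).
Proof.
  intros Hmu Hl Hx. unfold Defs.Delta.
  assert (0 < mu * (1 - mu) * (1 - lam) ^ 2) by (apply Rmult_lt_0_compat; [nra| apply pow_lt; lra]).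
  auto_derive. { lra. }
  field. repeat split; lra.
Qed.

Lemma upos s w : 1 <= s -> 0 < w < 1 -> 0 < 1 + - (2 * w * / (s + 1)).
Proof.
  intros. replace (1 + - (2 * w * / (s + 1))) with ((s + 1 - 2 * w) / (s + 1)) by (field; lra).
  apply Rdiv_lt_0_compat; lra.
Qed.

Lemma I_deriv mu lam x : 0 < mu < 1 -> 0 <= lam < 1 -> 0 < x < 1 ->
  is_derive (I_theta mu lam) x
   (- ln ((mu + (1-mu)*lam) / (1 - 2*(1-x)/(sqrt (Defs.Delta mu lam x)+1)))
    + ln (((1-mu)+mu*lam)/(1 - 2*x/(sqrt(Defs.Delta mu lam x)+1)))).
Proof.
  intros Hmu Hl Hx.
  pose proof (Delta_ge1 mu lam x Hmu Hl Hx) as HD.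
  pose proof (Delta_deriv mu lam x Hmu Hl Hx) as HdD.
  assert (Hs1 : 1 <= sqrt (Defs.Delta mu lam x)).
  { rewrite <- sqrt_1. apply sqrt_le_1_alt. lra. }
  assert (Hss : sqrt (Defs.Delta mu lam x) * sqrt (Defs.Delta mu lam x) = Defs.Delta mu lam x) by (apply sqrt_sqrt; lra).
  unfold I_theta. auto_derive.
  - assert (0 < mu + (1 - mu) * lam) by nra.
    assert (0 < 1 - mu + mu * lam) by nra.
    pose proof (upos _ (1 - x) Hs1 ltac:(lra)).
    pose proof (upos _ x Hs1 ltac:(lra)).
    assert (ex_derive (fun x0 : R => Defs.Delta mu lam x0) x) by (eexists; exact HdD).
    repeat split; try lra; try assumption;
    apply Rmult_lt_0_compat; try lra; apply Rinv_0_lt_compat; lra.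
  - assert (HD2 : Derive (fun x0 : R => Defs.Delta mu lam x0) x = (Defs.Delta mu lam x - 1) * (1 - 2 * x) / (x * (1 - x))) by (apply is_derive_unique; exact HdD); rewrite HD2.
    unfold Rdiv, Rminus.
    set (s := sqrt (Defs.Delta mu lam x)) in *.
    set (D := Defs.Delta mu lam x) in *.
    set (LA := ln _). set (LB := ln (_ * / (1 + - (2 * x * / (s + 1))))).
    rewrite <- Hss. clearbody s. clear HD2 HdD.
    assert (0 < mu + (1 - mu) * lam) by nra.
    assert (0 < 1 - mu + mu * lam) by nra.
    field. repeat split; try lra.
Qed.

Definition KLb (y p : R) := y * ln (y / p) + (1 - y) * ln ((1 - y) / (1 - p)).
Definition Yf (lam x : R) := ((1 - lam) * x + lam) / (1 + lam).
Definition Kk (lam : R) := (1 + lam) / (1 - lam).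

Lemma Yf_bounds lam x : 0 <= lam < 1 -> 0 < x < 1 -> 0 < Yf lam x < 1.
Proof.
  intros. unfold Yf. split.
  - apply Rdiv_lt_0_compat; nra.
  - apply Rmult_lt_reg_r with (1 + lam); [lra|]. unfold Rdiv. rewrite Rmult_assoc, Rinv_l; nra.
Qed.

Lemma KLb_deriv y p : 0 < y < 1 -> 0 < p < 1 ->
  is_derive (fun t => KLb t p) y (ln (y / p) - ln ((1 - y) / (1 - p))).
Proof.
  intros Hy Hp. unfold KLb. auto_derive.
  - repeat split; try (apply Rdiv_lt_0_compat; lra); try lra.
  - unfold Rdiv, Rminus. set (L1 := ln (y * / p)). set (L2 := ln ((1 + - y) * / (1 + - p))).
    field. repeat split; try lra.
Qed.

Lemma KL_part_deriv mu lam x : 0 < mu < 1 -> 0 <= lam < 1 -> 0 < x < 1 ->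
  is_derive (fun t => Kk lam * KLb (Yf lam t) (Yf lam mu)) x
    (ln (Yf lam x / Yf lam mu) - ln ((1 - Yf lam x) / (1 - Yf lam mu))).
Proof.
  intros Hmu Hl Hx.
  pose proof (Yf_bounds lam x Hl Hx). pose proof (Yf_bounds lam mu Hl Hmu).
  assert (HY : is_derive (Yf lam) x ((1 - lam) / (1 + lam))).
  { unfold Yf. auto_derive; [lra|]. field; lra. }
  pose proof (KLb_deriv _ _ H H0) as HK.
  pose proof (is_derive_comp (fun t => KLb t (Yf lam mu)) (Yf lam) x _ _ HK HY) as HC.
  pose proof (is_derive_scal _ x (Kk lam) _ HC) as HS.
  match type of HS with is_derive _ _ ?v =>
    replace v with (ln (Yf lam x / Yf lam mu) - ln ((1 - Yf lam x) / (1 - Yf lam mu))) in HS end.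
  - exact HS.
  - unfold scal; simpl; unfold mult; simpl. unfold Kk. field. lra.
Qed.

Lemma ln_div' x y : 0 < x -> 0 < y -> ln (x / y) = ln x - ln y.
Proof. intros. unfold Rdiv. rewrite ln_mult, ln_Rinv; try lra. apply Rinv_0_lt_compat; lra. Qed.

Lemma ln_le' x y : 0 < x -> x <= y -> ln x <= ln y.
Proof. intros. destruct (Req_dec x y) as [->|]; [lra|]. left; apply ln_increasing; lra. Qed.

Definition dD (mu lam c : R) : R :=
  (- ln ((mu + (1-mu)*lam) / (1 - 2*(1-c)/(sqrt (Defs.Delta mu lam c)+1)))
    + ln (((1-mu)+mu*lam)/(1 - 2*c/(sqrt(Defs.Delta mu lam c)+1))))
  - (ln (Yf lam c / Yf lam mu) - ln ((1 - Yf lam c) / (1 - Yf lam mu))).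

Lemma dD_sign mu lam c w : 0 < mu < 1 -> 0 <= lam < 1 -> 0 < c < 1 ->
  (1 - 2*c) * (c*(1-c) - mu*(1-mu)) * w >= 0 -> dD mu lam c * w >= 0.
Proof.
  intros Hmu Hl Hc Hsg.
  pose proof (Delta_ge1 mu lam c Hmu Hl Hc) as HD.
  assert (Hs1 : 1 <= sqrt (Defs.Delta mu lam c)).
  { rewrite <- sqrt_1. apply sqrt_le_1_alt. lra. }
  assert (Hss : sqrt (Defs.Delta mu lam c) * sqrt (Defs.Delta mu lam c) = Defs.Delta mu lam c) by (apply sqrt_sqrt; lra).
  pose proof (Yf_bounds lam c Hl Hc) as HY. pose proof (Yf_bounds lam mu Hl Hmu) as Hp.
  unfold dD.
  set (s := sqrt (Defs.Delta mu lam c)) in *.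
  set (a := mu + (1-mu)*lam). set (b := (1-mu)+mu*lam).
  assert (Ha : 0 < a) by (unfold a; nra). assert (Hb : 0 < b) by (unfold b; nra).
  assert (Hu : 0 < 1 - 2*(1-c)/(s+1)) by (pose proof (upos s (1-c) Hs1 ltac:(lra)); unfold Rminus, Rdiv; lra).
  assert (Hv : 0 < 1 - 2*c/(s+1)) by (pose proof (upos s c Hs1 ltac:(lra)); unfold Rminus, Rdiv; lra).
  set (u := 1 - 2*(1-c)/(s+1)) in *. set (v := 1 - 2*c/(s+1)) in *.
  set (Y := Yf lam c) in *.
  replace (Yf lam mu) with (a / (1 + lam)) by (unfold Yf, a; field; lra).
  replace (1 - a / (1 + lam)) with (b / (1 + lam)) by (unfold a, b; field; lra).
  rewrite !ln_div'; try lra; try (apply Rdiv_lt_0_compat; lra).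
  replace (- (ln a - ln u) + (ln b - ln v) - (ln Y - (ln a - ln (1 + lam)) - (ln (1 - Y) - (ln b - ln (1 + lam)))))
    with (ln (u * (1 - Y)) - ln (v * Y)) by (rewrite !ln_mult; lra).
  assert (HE : (u * (1 - Y) - v * Y) * w >= 0).
  { set (T := (1 - lam) * s - (1 + lam)). set (P := (1 - lam) * s + (1 + lam)).
    assert (HP : 0 < P) by (unfold P; nra).
    assert (E1 : u * (1 - Y) - v * Y = (1 - 2*c) * T / ((s+1)*(1+lam)))
      by (unfold u, v, Y, Yf, T; field; lra).
    assert (E2 : T * P = 4 * lam * (c*(1-c) - mu*(1-mu)) / (mu*(1-mu))).
    { replace (T * P) with ((1-lam)^2 * (s * s) - (1+lam)^2) by (unfold T, P; ring).
      rewrite Hss. unfold Defs.Delta. field. repeat split; try lra. }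
    assert (H1 : ((1 - 2*c) * T * w) * P >= 0).
    { replace (((1 - 2*c) * T * w) * P) with ((4 * lam / (mu*(1-mu))) * ((1 - 2*c) * (c*(1-c) - mu*(1-mu)) * w))
        by (replace (((1 - 2*c) * T * w) * P) with ((1 - 2*c) * w * (T * P)) by ring; rewrite E2; field; nra).
      apply Rle_ge, Rmult_le_pos; [|lra]. apply Rdiv_le_0_compat; nra. }
    assert (H2 : (1 - 2*c) * T * w >= 0) by nra.
    rewrite E1. replace ((1 - 2 * c) * T / ((s + 1) * (1 + lam)) * w) with (((1 - 2*c) * T * w) / ((s + 1) * (1 + lam))) by (field; lra).
    apply Rle_ge, Rdiv_le_0_compat; nra. }
  assert (0 < u * (1 - Y)) by nra. assert (0 < v * Y) by nra.
  destruct (Rtotal_order w 0) as [Hw|[Hw|Hw]].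
  - assert (u * (1 - Y) <= v * Y) by nra.
    pose proof (ln_le' _ _ H H1). nra.
  - subst; lra.
  - assert (v * Y <= u * (1 - Y)) by nra.
    pose proof (ln_le' _ _ H0 H1). nra.
Qed.

Lemma mvt_ex (f df : R -> R) (x z : R) :
  (forall t, Rmin z x <= t <= Rmax z x -> is_derive f t (df t)) ->
  exists c, Rmin z x <= c <= Rmax z x /\ f x - f z = df c * (x - z).
Proof.
  intros Hd. destruct (MVT_gen f z x df) as [c [Hc Heq]].
  - intros t Ht. apply Hd. simpl in Ht. lra.
  - intros t Ht. apply derivable_continuous_pt. exists (df t). apply is_derive_Reals. apply Hd. exact Ht.
  - exists c; split; auto.
Qed.

Lemma mvt_ge (f df : R -> R) (x z : R) :
  (forall t, Rmin z x <= t <= Rmax z x -> is_derive f t (df t)) ->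
  (forall t, Rmin z x <= t <= Rmax z x -> df t * (x - z) >= 0) -> f x >= f z.
Proof.
  intros Hd Hs. destruct (mvt_ex f df x z Hd) as [c [Hc Heq]].
  specialize (Hs c Hc). lra.
Qed.

Lemma sigma_sign z x c : (z - 1/2) * (x - 1/2) >= 0 -> Rmin z x <= c <= Rmax z x ->
  (1 - 2*c) * (c*(1-c) - z*(1-z)) * (x - z) >= 0.
Proof.
  intros H Hc.
  replace ((1 - 2*c) * (c*(1-c) - z*(1-z)) * (x - z)) with
    (((1 - 2*c) * (1 - c - z)) * ((c - z) * (x - z))) by ring.
  assert ((c - z) * (x - z) >= 0).
  { unfold Rmin, Rmax in Hc. destruct (Rle_dec z x); nra. }
  assert ((1 - 2*c) * (1 - c - z) >= 0).
  { destruct (Rtotal_order z (1/2)) as [Hz|[Hz|Hz]].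
    - assert (x <= 1/2) by nra.
      unfold Rmin, Rmax in Hc. destruct (Rle_dec z x); apply Rle_ge, Rmult_le_pos; lra.
    - subst z. replace ((1 - 2*c) * (1 - c - 1/2)) with (2*((1/2 - c)*(1/2 - c))) by field. assert (0 <= (1/2 - c)*(1/2 - c)) by apply Rle_0_sqr. lra.
    - assert (x >= 1/2) by nra.
      unfold Rmin, Rmax in Hc. destruct (Rle_dec z x);
      (replace ((1 - 2*c) * (1 - c - z)) with ((2*c - 1) * (c + z - 1)) by ring);
      apply Rle_ge, Rmult_le_pos; lra. }
  nra.
Qed.

Lemma sqrtDelta_anchor mu lam z : 0 < mu < 1 -> 0 <= lam < 1 -> z * (1 - z) = mu * (1 - mu) ->
  sqrt (Defs.Delta mu lam z) = (1 + lam) / (1 - lam).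
Proof.
  intros Hmu Hl Hz.
  replace (Defs.Delta mu lam z) with (((1 + lam) / (1 - lam))^2).
  - apply sqrt_pow2. apply Rlt_le, Rdiv_lt_0_compat; lra.
  - unfold Defs.Delta. replace (4 * lam * z * (1 - z)) with (4 * lam * (mu * (1 - mu))) by nra.
    field. repeat split; try lra.
Qed.

Lemma I_mu mu lam : 0 < mu < 1 -> 0 <= lam < 1 -> I_theta mu lam mu = 0.
Proof.
  intros Hmu Hl. unfold I_theta. rewrite (sqrtDelta_anchor mu lam mu Hmu Hl eq_refl).
  replace ((mu + (1 - mu) * lam) / (1 - 2 * (1 - mu) / ((1 + lam) / (1 - lam) + 1))) with 1
    by (field; repeat split; nra).
  replace ((1 - mu + mu * lam) / (1 - 2 * mu / ((1 + lam) / (1 - lam) + 1))) with 1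
    by (field; repeat split; nra).
  rewrite ln_1. ring.
Qed.

Lemma I_1mu mu lam : 0 < mu < 1 -> 0 <= lam < 1 ->
  I_theta mu lam (1 - mu) = (1 - 2 * mu) * ln ((1 - mu + mu * lam) / (mu + (1 - mu) * lam)).
Proof.
  intros Hmu Hl. unfold I_theta. rewrite (sqrtDelta_anchor mu lam (1 - mu) Hmu Hl ltac:(ring)).
  assert (0 < mu + (1 - mu) * lam) by nra. assert (0 < 1 - mu + mu * lam) by nra.
  replace ((mu + (1 - mu) * lam) / (1 - 2 * (1 - (1 - mu)) / ((1 + lam) / (1 - lam) + 1)))
    with ((mu + (1 - mu) * lam) / (1 - mu + mu * lam)) by (field; repeat split; nra).
  replace ((1 - mu + mu * lam) / (1 - 2 * (1 - mu) / ((1 + lam) / (1 - lam) + 1)))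
    with ((1 - mu + mu * lam) / (mu + (1 - mu) * lam)) by (field; repeat split; nra).
  rewrite !ln_div'; try lra.
Qed.

Lemma KL_same p : 0 < p < 1 -> KLb p p = 0.
Proof. intros. unfold KLb. rewrite !Rdiv_diag by lra. rewrite ln_1. ring. Qed.

Lemma KL_1mu mu lam : 0 < mu < 1 -> 0 <= lam < 1 ->
  Kk lam * KLb (Yf lam (1 - mu)) (Yf lam mu) = (1 - 2 * mu) * ln ((1 - mu + mu * lam) / (mu + (1 - mu) * lam)).
Proof.
  intros Hmu Hl. unfold KLb, Kk, Yf.
  assert (0 < mu + (1 - mu) * lam) by nra. assert (0 < 1 - mu + mu * lam) by nra.
  replace (((1 - lam) * (1 - mu) + lam) / (1 + lam) / (((1 - lam) * mu + lam) / (1 + lam)))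
    with ((1 - mu + mu * lam) / (mu + (1 - mu) * lam)) by (field; repeat split; nra).
  replace ((1 - ((1 - lam) * (1 - mu) + lam) / (1 + lam)) / (1 - ((1 - lam) * mu + lam) / (1 + lam)))
    with ((mu + (1 - mu) * lam) / (1 - mu + mu * lam)) by (field; repeat split; nra).
  rewrite !ln_div'; try lra. field. lra.
Qed.

Definition Dfun mu lam x := I_theta mu lam x - Kk lam * KLb (Yf lam x) (Yf lam mu).

Lemma Dfun_deriv mu lam x : 0 < mu < 1 -> 0 <= lam < 1 -> 0 < x < 1 ->
  is_derive (Dfun mu lam) x (dD mu lam x).
Proof.
  intros Hmu Hl Hx.
  pose proof (is_derive_minus _ _ x _ _ (I_deriv mu lam x Hmu Hl Hx) (KL_part_deriv mu lam x Hmu Hl Hx)) as H.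
  unfold minus, plus, opp in H; simpl in H. exact H.
Qed.

Lemma markov_bernoulli mu lam x : 0 < mu < 1 -> 0 <= lam < 1 -> 0 < x < 1 ->
  I_theta mu lam x >= Kk lam * KLb (Yf lam x) (Yf lam mu).
Proof.
  intros Hmu Hl Hx.
  assert (Hz : exists z, 0 < z < 1 /\ z * (1 - z) = mu * (1 - mu) /\ (z - 1/2) * (x - 1/2) >= 0
                 /\ Dfun mu lam z = 0).
  { destruct (Rle_dec 0 ((mu - 1/2) * (x - 1/2))).
    - exists mu. repeat split; try lra. unfold Dfun. rewrite I_mu, KL_same; try lra.
      apply Yf_bounds; lra.
    - exists (1 - mu). repeat split; try lra; try ring. unfold Dfun. rewrite I_1mu, KL_1mu; lra. }
  destruct Hz as [z [Hz1 [Hz2 [Hz3 Hz4]]]].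
  assert (Dfun mu lam x >= Dfun mu lam z).
  { apply (mvt_ge _ (dD mu lam)).
    - intros t Ht. apply Dfun_deriv; auto. unfold Rmin, Rmax in Ht. destruct (Rle_dec z x); lra.
    - intros t Ht. apply dD_sign; auto.
      + unfold Rmin, Rmax in Ht. destruct (Rle_dec z x); lra.
      + rewrite <- Hz2. apply sigma_sign; auto. }
  unfold Dfun in *. lra.
Qed.

Lemma minmax_in a b t : 0 < a < 1 -> 0 < b < 1 -> Rmin a b <= t <= Rmax a b -> 0 < t < 1.
Proof. intros. unfold Rmin, Rmax in *. destruct (Rle_dec a b); lra. Qed.

Lemma pinsker y p : 0 < y < 1 -> 0 < p < 1 -> KLb y p >= 2 * (y - p)^2.
Proof.
  intros Hy Hp.
  pose (F := fun q => KLb y q - 2 * (y - q)^2).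
  assert (H : F p >= F y).
  { apply (mvt_ge F (fun t => (t - y) * (1 - 2*t)^2 / (t * (1 - t)))).
    - intros t Ht. pose proof (minmax_in _ _ _ Hy Hp Ht).
      unfold F, KLb. auto_derive.
      + repeat split; try (apply Rdiv_lt_0_compat; lra); lra.
      + field. repeat split; lra.
    - intros t Ht. pose proof (minmax_in _ _ _ Hy Hp Ht).
      replace ((t - y) * (1 - 2 * t) ^ 2 / (t * (1 - t)) * (p - y)) with
        (((t - y) * (p - y)) * ((1 - 2 * t) ^ 2 / (t * (1 - t)))) by (field; lra).
      apply Rle_ge, Rmult_le_pos.
      + unfold Rmin, Rmax in Ht. destruct (Rle_dec y p); nra.
      + apply Rdiv_le_0_compat; [apply pow2_ge_0| nra]. }
  unfold F in H. rewrite KL_same in H by lra. lra.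
Qed.

Definition phi p := ln ((1 - p) / p) / (1 - 2 * p).
Definition ww p t := ln (t / (1 - t)) - 2 * phi p * t.

Lemma ww_deriv p t : 0 < t < 1 -> is_derive (ww p) t (1 / (t * (1 - t)) - 2 * phi p).
Proof.
  intros Ht. unfold ww. auto_derive.
  - repeat split; try lra. apply Rdiv_lt_0_compat; lra.
  - field. repeat split; lra.
Qed.

Lemma ww_half p : 0 < p < 1/2 -> ww p p = ww p (1/2).
Proof.
  intros Hp. unfold ww, phi.
  replace (1/2 / (1 - 1/2)) with 1 by field. rewrite ln_1.
  replace (ln (p / (1 - p))) with (- ln ((1 - p) / p)).
  - field. lra.
  - rewrite !ln_div'; lra.
Qed.

Lemma ww_dec p d t : 0 < d -> d <= t <= 1/2 -> 1 / (t * (1 - t)) - 2 * phi p <= 1 / (d * (1 - d)) - 2 * phi p.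
Proof.
  intros. assert (d * (1 - d) <= t * (1 - t)) by nra.
  assert (0 < d * (1 - d)) by nra.
  assert (1 / (t * (1 - t)) <= 1 / (d * (1 - d))).
  { apply Rmult_le_reg_r with (d * (1 - d) * (t * (1 - t))); [nra|].
    field_simplify; nra. }
  lra.
Qed.

Lemma ww_A p c : 0 < p < 1/2 -> p <= c <= 1/2 -> ww p c >= ww p p.
Proof.
  intros Hp Hc.
  destruct (Rlt_dec (ww p c) (ww p p)) as [Hlt|]; [|lra].
  exfalso.
  destruct (mvt_ex (ww p) (fun t => 1 / (t * (1 - t)) - 2 * phi p) c p) as [d [Hd Heq]].
  { intros t Ht. apply ww_deriv. unfold Rmin, Rmax in Ht. destruct (Rle_dec p c); lra. }
  assert (Hdd : p <= d <= c) by (unfold Rmin, Rmax in Hd; destruct (Rle_dec p c); lra).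
  assert (Hcp : c <> p) by (intro E; rewrite E in Hlt; lra).
  assert (Hneg : 1 / (d * (1 - d)) - 2 * phi p < 0).
  { destruct (Rlt_dec (1 / (d * (1 - d)) - 2 * phi p) 0); [lra|].
    assert (0 <= (1 / (d * (1 - d)) - 2 * phi p) * (c - p)) by (apply Rmult_le_pos; lra). lra. }
  assert (ww p c >= ww p (1/2)).
  { apply (mvt_ge (ww p) (fun t => 1 / (t * (1 - t)) - 2 * phi p)).
    - intros t Ht. apply ww_deriv. unfold Rmin, Rmax in Ht. destruct (Rle_dec (1/2) c); lra.
    - intros t Ht. assert (d <= t <= 1/2) by (unfold Rmin, Rmax in Ht; destruct (Rle_dec (1/2) c); lra).
      pose proof (ww_dec p d t ltac:(lra) H). apply Rle_ge.
      replace ((1 / (t * (1 - t)) - 2 * phi p) * (c - 1/2)) with ((- (1 / (t * (1 - t)) - 2 * phi p)) * (1/2 - c)) by ring.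
      apply Rmult_le_pos; lra. }
  rewrite <- ww_half in H by lra. lra.
Qed.

Lemma ww_B p c : 0 < p < 1/2 -> 0 < c <= p -> ww p c <= ww p p.
Proof.
  intros Hp Hc.
  destruct (Rlt_dec (ww p p) (ww p c)) as [Hlt|]; [|lra].
  exfalso.
  destruct (mvt_ex (ww p) (fun t => 1 / (t * (1 - t)) - 2 * phi p) p c) as [d [Hd Heq]].
  { intros t Ht. apply ww_deriv. unfold Rmin, Rmax in Ht. destruct (Rle_dec c p); lra. }
  assert (Hdd : c <= d <= p) by (unfold Rmin, Rmax in Hd; destruct (Rle_dec c p); lra).
  assert (Hcp : c <> p) by (intro E; rewrite E in Hlt; lra).
  assert (Hneg : 1 / (d * (1 - d)) - 2 * phi p < 0).
  { destruct (Rlt_dec (1 / (d * (1 - d)) - 2 * phi p) 0); [lra|].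
    assert (0 <= (1 / (d * (1 - d)) - 2 * phi p) * (p - c)) by (apply Rmult_le_pos; lra). lra. }
  destruct (mvt_ex (ww p) (fun t => 1 / (t * (1 - t)) - 2 * phi p) (1/2) p) as [e [He Heq2]].
  { intros t Ht. apply ww_deriv. unfold Rmin, Rmax in Ht. destruct (Rle_dec p (1/2)); lra. }
  assert (Hee : p <= e <= 1/2) by (unfold Rmin, Rmax in He; destruct (Rle_dec p (1/2)); lra).
  pose proof (ww_dec p d e ltac:(lra) ltac:(lra)).
  assert ((1 / (e * (1 - e)) - 2 * phi p) * (1/2 - p) < 0).
  { replace ((1 / (e * (1 - e)) - 2 * phi p) * (1/2 - p)) with (- ((-(1 / (e * (1 - e)) - 2 * phi p)) * (1/2 - p))) by ring.
    assert (0 < (-(1 / (e * (1 - e)) - 2 * phi p)) * (1/2 - p)) by (apply Rmult_lt_0_compat; lra). lra. }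
  rewrite <- ww_half in Heq2 by lra. lra.
Qed.

Lemma ln_mulinv x y : 0 < x -> 0 < y -> ln (x * / y) = ln x - ln y.
Proof. intros. apply ln_div'; auto. Qed.

Definition hh p y := KLb y p - phi p * (y - p)^2.

Lemma hh_deriv p y : 0 < p < 1 -> 0 < y < 1 -> is_derive (hh p) y (ww p y - ww p p).
Proof.
  intros Hp Hy. unfold hh, KLb. auto_derive.
  - repeat split; try (apply Rdiv_lt_0_compat; lra); lra.
  - unfold ww, Rdiv, Rminus. rewrite !ln_mulinv; try lra.
    field. repeat split; lra.
Qed.

Lemma hh_sym p y : 0 < p < 1 -> 0 < y < 1 -> p <> 1/2 -> hh p y = hh p (1 - y).
Proof.
  intros Hp Hy Hp2. unfold hh, KLb, phi.
  replace (1 - (1 - y)) with y by ring.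
  rewrite !ln_div'; try lra. field. lra.
Qed.

Lemma ow_low p y : 0 < p < 1/2 -> 0 < y < 1 -> KLb y p >= phi p * (y - p)^2.
Proof.
  intros Hp Hy.
  assert (Hh : forall y, 0 < y <= 1/2 -> hh p y >= 0).
  { intros y0 Hy0.
    assert (hh p y0 >= hh p p).
    { apply (mvt_ge (hh p) (fun t => ww p t - ww p p)).
      - intros t Ht. apply hh_deriv; [lra|]. unfold Rmin, Rmax in Ht. destruct (Rle_dec p y0); lra.
      - intros t Ht. unfold Rmin, Rmax in Ht. destruct (Rle_dec p y0).
        + pose proof (ww_A p t Hp ltac:(lra)). apply Rle_ge, Rmult_le_pos; lra.
        + pose proof (ww_B p t Hp ltac:(lra)).
          replace ((ww p t - ww p p) * (y0 - p)) with ((ww p p - ww p t) * (p - y0)) by ring.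
          apply Rle_ge, Rmult_le_pos; lra. }
    unfold hh at 2 in H. rewrite KL_same in H by lra. lra. }
  destruct (Rle_dec y (1/2)).
  - pose proof (Hh y ltac:(lra)). unfold hh in H. lra.
  - pose proof (Hh (1 - y) ltac:(lra)). rewrite <- hh_sym in H by lra. unfold hh in H. lra.
Qed.

Lemma ow p y : 0 < p < 1 -> p <> 1/2 -> 0 < y < 1 -> KLb y p >= phi p * (y - p)^2.
Proof.
  intros Hp Hp2 Hy.
  destruct (Rlt_dec p (1/2)).
  - apply ow_low; lra.
  - pose proof (ow_low (1 - p) (1 - y) ltac:(lra) ltac:(lra)).
    replace (KLb y p) with (KLb (1 - y) (1 - p)).
    + replace (phi p) with (phi (1 - p)).
      * replace ((y - p)^2) with ((1 - y - (1 - p))^2) by ring. exact H.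
      * unfold phi. replace (1 - (1 - p)) with p by ring. rewrite !ln_div'; try lra. field. lra.
    + unfold KLb. replace (1 - (1 - y)) with y by ring. replace (1 - (1 - p)) with p by ring. ring.
Qed.

Theorem mainTheorem4 (mu lam : R) (Hmu : 0 < mu < 1) (Hlam : 0 <= lam < 1) :
  (forall x : R, 0 < x < 1 ->
     I_theta mu lam x >= 2 * ((1 - lam) / (1 + lam)) * (x - mu) ^ 2) /\
  (mu <> 1 / 2 ->
     forall x : R, 0 < x < 1 -> x <> mu ->
       g_ratio mu lam (1 - mu) <= g_ratio mu lam x).
Proof.
  assert (HK : 0 < Kk lam) by (unfold Kk; apply Rdiv_lt_0_compat; lra).
  pose proof (Yf_bounds lam mu Hlam Hmu) as Hp.
  split.
  - intros x Hx.
    pose proof (markov_bernoulli mu lam x Hmu Hlam Hx) as H1.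
    pose proof (Yf_bounds lam x Hlam Hx) as HY.
    pose proof (pinsker _ _ HY Hp) as H2.
    assert (Kk lam * KLb (Yf lam x) (Yf lam mu) >= Kk lam * (2 * (Yf lam x - Yf lam mu) ^ 2))
      by (apply Rle_ge, Rmult_le_compat_l; lra).
    replace (2 * ((1 - lam) / (1 + lam)) * (x - mu) ^ 2) with (Kk lam * (2 * (Yf lam x - Yf lam mu) ^ 2))
      by (unfold Kk, Yf; field; lra).
    lra.
  - intros Hmu2 x Hx Hxmu.
    pose proof (markov_bernoulli mu lam x Hmu Hlam Hx) as H1.
    pose proof (Yf_bounds lam x Hlam Hx) as HY.
    assert (Hp2 : Yf lam mu <> 1/2).
    { intro E. unfold Yf in E.
      assert (E2 : (1 - lam) * mu + lam = 1/2 * (1 + lam)) by (rewrite <- E; field; lra).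
      assert (E3 : (1 - lam) * (mu - 1/2) = 0) by lra.
      apply Rmult_integral in E3. destruct E3; lra. }
    pose proof (ow _ _ Hp Hp2 HY) as H2.
    assert (0 < mu + (1 - mu) * lam) by nra. assert (0 < 1 - mu + mu * lam) by nra.
    assert (Hc : g_ratio mu lam (1 - mu) = phi (Yf lam mu) * ((1 - lam) / (1 + lam))).
    { unfold g_ratio. rewrite I_1mu by auto. unfold phi, Yf.
      replace ((1 - ((1 - lam) * mu + lam) / (1 + lam)) / (((1 - lam) * mu + lam) / (1 + lam)))
        with ((1 - mu + mu * lam) / (mu + (1 - mu) * lam)) by (field; repeat split; nra).
      field. repeat split; try lra.
      intro E. apply Hmu2.
      assert (E3 : (1 - lam) * (1 - 2 * mu) = 0) by lra.
      apply Rmult_integral in E3. destruct E3; lra. }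
    rewrite Hc. unfold g_ratio.
    assert (Hxm : 0 < (x - mu)^2).
    { assert (x - mu <> 0) by lra. simpl. rewrite Rmult_1_r. apply Rsqr_pos_lt in H3. exact H3. }
    assert (Hbig : I_theta mu lam x >= phi (Yf lam mu) * ((1 - lam) / (1 + lam)) * (x - mu)^2).
    { assert (Kk lam * KLb (Yf lam x) (Yf lam mu) >= Kk lam * (phi (Yf lam mu) * (Yf lam x - Yf lam mu) ^ 2))
        by (apply Rle_ge, Rmult_le_compat_l; lra).
      replace (phi (Yf lam mu) * ((1 - lam) / (1 + lam)) * (x - mu)^2)
        with (Kk lam * (phi (Yf lam mu) * (Yf lam x - Yf lam mu) ^ 2)) by (unfold Kk, Yf; field; lra).
      lra. }
    apply Rmult_le_reg_r with ((x - mu)^2); [exact Hxm|].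
    replace (I_theta mu lam x / (x - mu)^2 * (x - mu)^2) with (I_theta mu lam x) by (field; lra). lra.
Qed.
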